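(* Suppose that a dumbbell, with holes $H$, $H'$ and path $P=x\dots x'$, is the underlying graph of some oriented graph $G$ derived from a Burling tree $(T,r,\ell,c)$. Then either $x$ is not a subordinate vertex of $H$ or $x'$ is not a subordinate vertex of $H'$.
   Context: Graphs are finite, without loops or multiple edges; oriented graphs have no pair of opposite arcs. A hole is an induced cycle of length at least $4$. A dumbbell is a graph made of a path $P=x\dots x'$ (possibly $x=x'$), a hole $H$ through $x$ and a hole $H'$ through $x'$, such that $V(H)\cap V(P)=\{x\}$, $V(H')\cap V(P)=\{x'\}$, $V(H)\cap V(H')=\{x\}\cap\{x'\}$, and there are no edges other than those of $P$, $H$ and $H'$. In a rooted tree $T$ with root $r$, each non-root vertex $v$ has a parent $p(v)$; children, leaves, ancestors and descendants are as usual. A branch is a sequence $v_1\dots v_k$ ($k\ge0$) with $v_i$ the parent of $v_{i+1}$; it starts at $v_1$. A Burling tree is a 4-tuple $(T,r,\ell,c)$: $T$ a rooted tree with root $r$; $\ell$ assigns to each non-leaf vertex $v$ one of its children $\ell(v)$ (the last-born of $v$); $c$ assigns to every vertex $v$ that is neither the root nor a last-born the vertex-set of a (possibly empty) branch starting at $\ell(p(v))$, and $c(v)=\emptyset$ if $v$ is the root or a last-born. The oriented graph fully derived from it has vertex-set $V(T)$ and an arc $uv$ iff $v\in c(u)$; an oriented graph is derived from the Burling tree if it is an induced subgraph of the fully derived one. A hole of an oriented graph means a hole of its underlying graph. If $G$ is derived from $T$ and $H$ is a hole of $G$, then (as established in the paper) $H$ with the inherited orientation has exactly two sources, called its antennas,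 and exactly two sinks; exactly one of these sinks is adjacent to both antennas and is an ancestor in $T$ of all vertices of $H$ other than the antennas: it is the pivot of $H$. A vertex of $H$ is subordinate if it is neither the pivot nor an antenna of $H$. *)

(* Defs.v *)
From mathcomp Require Import all_boot.
Set Implicit Arguments. Unset Strict Implicit. Unset Printing Implicit Defensive.

Section Burling.
Variable V : finType.

Fixpoint piter (par : V -> option V) (n : nat) (v : V) : option V :=
  match n with 0 => Some v | n'.+1 => obind par (piter par n' v) end.

Definition ancestor (par : V -> option V) (u v : V) : Prop :=
  exists n, piter par n v = Some u.

Definition childrel (par : V -> option V) : rel V := fun a b => par b == Some a.

Definition is_branch (par : V -> option V) (s : seq V) : bool :=
  sorted (childrel par) s.

Record burling_tree := BurlingTree {
  root : V;
  par : V -> option V;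
  lb : V -> option V;                  (* last-born child; None exactly at leaves *)
  bc : V -> {set V};
  par_root : par root = None;
  par_nonroot : forall v, v != root -> par v <> None;
  root_anc : forall v, ancestor par root v;
  lb_child : forall v w, lb v = Some w -> par w = Some v;
  lb_leaf : forall v, lb v = None <-> (forall w, par w <> Some v);
  bc_root : bc root = set0;
  bc_lastborn : forall u v, lb u = Some v -> bc v = set0;
  bc_branch : forall u v, par v = Some u -> lb u <> Some v ->
     exists s : seq V, is_branch par s /\ (s = [::] \/ ohead s = lb u)
                       /\ bc v = [set y | y \in s]
}.

(* arcs of the fully derived oriented graph *)
Definition arc (B : burling_tree) (u v : V) : bool := v \in bc B u.

(* underlying graph of the oriented graph G derived from B, induced on S *)
Definition ugraph (B : burling_tree) (S : {set V}) : rel V :=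
  fun u v => [&& u \in S, v \in S & arc B u v || arc B v u].

Definition hedge (hs : seq V) (u v : V) : bool :=
  ((u \in hs) && (v == next hs u)) || ((v \in hs) && (u == next hs v)).

Definition pedge (ps : seq V) (u v : V) : bool :=
  infix [:: u; v] ps || infix [:: v; u] ps.

Definition hole (adj : rel V) (hs : seq V) : Prop :=
  [/\ uniq hs, 4 <= size hs &
      forall u v, u \in hs -> v \in hs -> adj u v = hedge hs u v].

Definition dumbbell (adj : rel V) (S : {set V})
    (hs hs' ps : seq V) (x x' : V) : Prop :=
  [/\ hole adj hs /\ hole adj hs',
      [/\ uniq ps, ohead ps = Some x, last x ps = x' & sorted adj ps],
      [/\ [set v | v \in hs] :&: [set v | v \in ps] = [set x],
          [set v | v \in hs'] :&: [set v | v \in ps] = [set x'] &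
          [set v | v \in hs] :&: [set v | v \in hs'] = [set x] :&: [set x'] ],
      S = [set v | v \in hs ++ hs' ++ ps] &
      forall u v, adj u v = [|| hedge hs u v, hedge hs' u v | pedge ps u v] ].

Definition hsource (B : burling_tree) (hs : seq V) (v : V) : bool :=
  [&& v \in hs, arc B v (next hs v) & arc B v (prev hs v)].
Definition hsink (B : burling_tree) (hs : seq V) (v : V) : bool :=
  [&& v \in hs, arc B (next hs v) v & arc B (prev hs v) v].

Definition pivot (B : burling_tree) (hs : seq V) (z : V) : Prop :=
  [/\ hsink B hs z,
      forall a, hsource B hs a -> arc B z a || arc B a z &
      forall w, w \in hs -> ~~ hsource B hs w -> ancestor (par B) z w].

Definition subordinate (B : burling_tree) (hs : seq V) (v : V) : Prop :=
  [/\ v \in hs, ~~ hsource B hs v & ~ pivot B hs v].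

End Burling.

(* Main.v *)
From mathcomp Require Import all_boot zify.
Require Import Defs.
Set Implicit Arguments. Unset Strict Implicit. Unset Printing Implicit Defensive.

Lemma piter_add (V : finType) (p : V -> option V) m n v :
  piter p (m + n) v = obind (piter p m) (piter p n v).
Proof.
elim: m v => [|m IH] v /=; first by case: (piter p n v).
rewrite IH; case: (piter p n v) => //= a.
Qed.

Lemma piter1 (V : finType) (p : V -> option V) n v w :
  p v = Some w -> piter p (n.+1) v = piter p n w.
Proof. by move=> h; rewrite -addn1 piter_add /= h. Qed.



Lemma root_none (V : finType) (B : burling_tree V) d :
  piter (par B) d.+1 (root B) = None.
Proof. by rewrite -addn1 (@piter_add _ _ d 1) /= par_root. Qed.

Definition depth (V : finType) (B : burling_tree V) (v : V) : nat :=
  ex_minn (let: ex_intro n h := root_anc B v in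
           ex_intro (fun n => piter (par B) n v == Some (root B)) n (introT eqP h)).

Lemma depthP (V : finType) (B : burling_tree V) v :
  piter (par B) (depth B v) v = Some (root B).
Proof. rewrite /depth; case: (root_anc B v) => n h; case: ex_minnP => m /eqP //. Qed.

Lemma root_uniq (V : finType) (B : burling_tree V) v n m :
  piter (par B) n v = Some (root B) -> piter (par B) m v = Some (root B) -> n = m.
Proof.
wlog le: n m / n <= m => [H|].
  by case/orP: (leq_total n m) => h h1 h2; [apply: H | symmetry; apply: H].
move=> h1 h2; have [d E] : exists d, m = d + n by exists (m - n); lia.
subst m; move: h2 le; rewrite piter_add h1 /=; case: d => [|d]; first by [].
by rewrite root_none.
Qed.

Lemma anc_depth (V : finType) (B : burling_tree V) a b k :
  piter (par B) k b = Some a -> depth B b = depth B a + k.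
Proof.
move=> h; apply: (@root_uniq _ B b); first exact: depthP.
by rewrite piter_add h /= depthP.
Qed.

Notation anc B := (ancestor (par B)).

Lemma anc_refl (V : finType) (B : burling_tree V) v : anc B v v.
Proof. by exists 0. Qed.

Lemma anc_trans (V : finType) (B : burling_tree V) a b c :
  anc B a b -> anc B b c -> anc B a c.
Proof. by case=> m hm [n hn]; exists (m + n); rewrite piter_add hn /= hm. Qed.

Lemma anc_par (V : finType) (B : burling_tree V) c p :
  par B c = Some p -> anc B p c.
Proof. by move=> h; exists 1. Qed.

Lemma anc_eq_depth (V : finType) (B : burling_tree V) a b :
  anc B a b -> depth B a <= depth B b /\ (depth B b = depth B a -> a = b).
Proof.
case=> k hk; have E := anc_depth hk; split.
  rewrite E; exact: leq_addr.
move=> E2; have k0 : k = 0.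
  move: E; rewrite E2 -{1}(addn0 (depth B a)) => /eqP; rewrite eqn_add2l => /eqP //.
by move: hk; rewrite k0 => -[].
Qed.

Lemma anc_antisym (V : finType) (B : burling_tree V) a b :
  anc B a b -> anc B b a -> a = b.
Proof.
move=> /anc_eq_depth [h1 h2] /anc_eq_depth [h3 h4]; apply: h2; lia.
Qed.

Lemma par_neq (V : finType) (B : burling_tree V) c p :
  par B c = Some p -> p <> c.
Proof.
move=> h E; have := anc_depth (k := 1) (a := p) (b := c) (B := B).
rewrite /= h => /(_ erefl); rewrite E; lia.
Qed.

Lemma anc_strict_par (V : finType) (B : burling_tree V) a c p :
  anc B a c -> a <> c -> par B c = Some p -> anc B a p.
Proof.
case=> [[|k]] hk ne hp; first by case: hk => /esym.
by exists k; rewrite -(piter1 _ hp).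
Qed.

Lemma anc_total (V : finType) (B : burling_tree V) a b y :
  anc B a y -> anc B b y -> anc B a b \/ anc B b a.
Proof.
case=> n hn [m hm]; case/orP: (leq_total n m) => le.
  have [d E] : exists d, m = d + n by exists (m - n); move: le; clear; lia.
  by subst m; right; exists d; move: hm; rewrite piter_add hn.
have [d E] : exists d, n = d + m by exists (n - m); move: le; clear; lia.
by subst n; left; exists d; move: hn; rewrite piter_add hm.
Qed.

Lemma sibling_anc (V : finType) (B : burling_tree V) a b q :
  par B a = Some q -> par B b = Some q -> anc B a b -> a = b.
Proof.
move=> ha hb ab; case: (eqVneq a b) => // /eqP ne.
have aq := anc_strict_par ab ne hb.
have qa := anc_par ha.
have E := anc_antisym aq qa; subst q.
by case: (par_neq ha).
Qed.

Lemma branch_head (V : finType) (B : burling_tree V) a s y :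
  sorted (childrel (par B)) (a :: s) -> y \in a :: s -> anc B a y.
Proof.
elim: s a => [|b s IH] a /=.
  by move=> _; rewrite inE => /eqP ->; apply: anc_refl.
case/andP=> /eqP hab hs; rewrite inE => /orP [/eqP -> |hy]; first exact: anc_refl.
exact: anc_trans (anc_par hab) (IH b hs hy).
Qed.

Lemma branch_comp (V : finType) (B : burling_tree V) s y1 y2 :
  sorted (childrel (par B)) s -> y1 \in s -> y2 \in s ->
  anc B y1 y2 \/ anc B y2 y1.
Proof.
elim: s => [|a s IH] //= hs.
have hs' : sorted (childrel (par B)) s by case: s hs {IH} => //= b s /andP[].
rewrite !inE => /orP [/eqP -> | h1] /orP [/eqP -> | h2].
- by left; apply: anc_refl.
- by left; apply: branch_head hs _; rewrite inE h2 orbT.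
- by right; apply: branch_head hs _; rewrite inE h1 orbT.
- exact: IH.
Qed.

Lemma branch_convex (V : finType) (B : burling_tree V) a s v y :
  sorted (childrel (par B)) (a :: s) -> v \in a :: s ->
  anc B a y -> anc B y v -> y \in a :: s.
Proof.
elim: s a => [|b s IH] a /=.
  move=> _; rewrite inE => /eqP -> h1 h2.
  by rewrite (anc_antisym h1 h2) inE eqxx.
case/andP=> /eqP hab hs; rewrite inE => /orP [/eqP -> | hv] ay yv.
  by rewrite (anc_antisym ay yv) inE eqxx.
case: (eqVneq y a) => [->|ne]; first by rewrite inE eqxx.
have bv := branch_head hs hv.
case: (anc_total yv bv) => h.
  have := anc_strict_par h _ hab.
  case: (eqVneq y b) => [->|neb]; first by rewrite !inE eqxx orbT.
  move=> /(_ (elimN eqP neb)) ya.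
  by move: ne; rewrite (anc_antisym ay ya) eqxx.
by rewrite inE (IH b hs hv h yv) orbT.
Qed.

Lemma arcP (V : finType) (B : burling_tree V) u v :
  arc B u v -> exists pu L, [/\ par B u = Some pu, lb B pu = Some L,
    par B L = Some pu, L <> u & anc B L v] /\
    forall y, anc B L y -> anc B y v -> arc B u y.
Proof.
rewrite /arc => huv.
case: (eqVneq u (root B)) => [E|nr]; first by move: huv; rewrite E bc_root inE.
case hp: (par B u) => [pu|]; last by case: (par_nonroot nr).
case: (eqVneq (lb B pu) (Some u)) => [hl|hl].
  by move: huv; rewrite (bc_lastborn hl) inE.
have [s [hs [hs0 hbc]]] := bc_branch hp (elimN eqP hl).
move: huv; rewrite hbc inE.
case: s hs hs0 hbc => [|L s] // hs [] // /= hL hbc hv.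
exists pu, L; split; first split => //.
- exact: lb_child (esym hL).
- by move=> E; move: hl; rewrite -hL E eqxx.
- exact: branch_head hs hv.
- by move=> y h1 h2; rewrite /arc inE; exact: branch_convex hs hv h1 h2.
Qed.

Lemma arc_incomp (V : finType) (B : burling_tree V) u v :
  arc B u v -> ~ anc B u v /\ ~ anc B v u.
Proof.
case/arcP=> pu [L [[hu hL hLp ne Lv] _]].
have sib : forall y, anc B u y -> anc B L y -> False.
  move=> y uy Ly; case: (anc_total uy Ly) => h.
  - by apply: ne; apply/esym; apply: sibling_anc hu hLp h.
  - by apply: ne; apply: sibling_anc hLp hu h.
split=> h; first exact: sib v h Lv.
by apply: (sib u (anc_refl _ _)); apply: anc_trans Lv h.
Qed.

Lemma arc_neq (V : finType) (B : burling_tree V) u v : arc B u v -> u <> v.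
Proof. by move=> /arc_incomp [h _] E; apply: h; rewrite E; apply: anc_refl. Qed.

Lemma arc_asym (V : finType) (B : burling_tree V) u v :
  arc B u v -> ~~ arc B v u.
Proof.
move=> huv; apply/negP=> hvu.
have [pu [L [[hu hL hLp ne Lv] _]]] := arcP huv.
have [pv [L' [[hv hL' hLp' ne' Lu] _]]] := arcP hvu.
have puv : anc B pu v := anc_trans (anc_par hLp) Lv.
have pvu : anc B pv u := anc_trans (anc_par hLp') Lu.
have pu_pv : anc B pu pv.
  apply: anc_strict_par puv _ hv => E; subst pu.
  by case: (arc_incomp huv) => _ /(_ (anc_par hu)).
have pv_pu : anc B pv pu.
  apply: anc_strict_par pvu _ hu => E; subst pv.
  by case: (arc_incomp hvu) => _ /(_ (anc_par hv)).
have E := anc_antisym pu_pv pv_pu; subst pv.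
have vL : v = L by apply/esym; apply: sibling_anc hLp hv Lv.
by subst v; move: hvu; rewrite /arc (bc_lastborn hL) inE.
Qed.

Lemma prop_step (V : finType) (B : burling_tree V) z w w' :
  anc B z w -> z <> w -> (arc B w w' || arc B w' w) -> w' <> z ->
  ~~ arc B w' z -> anc B z w'.
Proof.
move=> zw ne /orP [h|h] ne' nh.
  have [pw [L [[hw hL hLp _ Lw'] _]]] := arcP h.
  have zpw := anc_strict_par zw ne hw.
  exact: anc_trans zpw (anc_trans (anc_par hLp) Lw').
have [pw [L [[hw hL hLp neL Lw] conv]]] := arcP h.
case: (anc_total zw Lw) => zL.
  have zpw : anc B z pw.
    apply: anc_strict_par zL _ hLp => E; subst z.
    by move: nh; rewrite conv ?eqxx // ; apply: anc_refl.
  exact: anc_trans zpw (anc_par hw).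
by move: nh; rewrite conv.
Qed.

Lemma lastborn_noarc (V : finType) (B : burling_tree V) q L y :
  lb B q = Some L -> ~~ arc B L y.
Proof. by move=> h; rewrite /arc (bc_lastborn h) inE. Qed.

Lemma next_neq_prev (T : eqType) (hs : seq T) y :
  uniq hs -> 3 <= size hs -> y \in hs -> next hs y != prev hs y.
Proof.
move=> U sz /rot_to [i t E].
have U' : uniq (y :: t) by rewrite -E rot_uniq.
have sz' : 3 <= size (y :: t) by rewrite -E size_rot.
rewrite -(next_rot i U) -(prev_rot i U) E.
apply/eqP => h.
have := next_prev U' y; rewrite -h.
case: t U' sz' {E h} => [|a [|b t]] //= U' _.
move: U'; rewrite !inE !negb_or => /and3P [/andP [ya yb] _ /andP[ab _]].
rewrite /next /= eqxx eq_sym (negbTE ya) eqxx => E.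
by move: yb; rewrite E eqxx.
Qed.

Lemma cycle_walk (T : eqType) (hs : seq T) a (Q : T -> Prop) :
  uniq hs -> a \in hs -> Q (next hs a) ->
  (forall c, c \in hs -> c <> a -> Q c -> next hs c <> a -> Q (next hs c)) ->
  forall c, c \in hs -> c <> a -> Q c.
Proof.
move=> U /rot_to [i t E].
have U' : uniq (a :: t) by rewrite -E rot_uniq.
have memE : forall c, (c \in hs) = (c \in a :: t) by move=> c; rewrite -E mem_rot.
have nE : forall c, next hs c = next (a :: t) c by move=> c; rewrite -E next_rot.
move=> Q0 step c; rewrite memE => hc nc.
have nth_next : forall k, k < size t -> next (a :: t) (nth a t k) = nth a t k.+1.
  move=> k hk; rewrite next_nth.
  have -> : (nth a t k \in a :: t) = true by rewrite inE mem_nth ?orbT.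
  rewrite /=; move: U' => /= /andP [na Ut].
  have : nth a t k != a by apply: contraNneq na => <-; rewrite mem_nth.
  by rewrite eq_sym => /negbTE ->; rewrite index_uniq.
have all : forall k, k < size t -> Q (nth a t k).
  elim=> [|k IH] hk.
    by move: Q0; rewrite nE /next /=; case: t {E U' memE nE nth_next hc} hk => //= b t _; rewrite eqxx.
  have hk' : k < size t by apply: ltnW.
  have := step (nth a t k); rewrite memE nE (nth_next k hk'); apply.
  - by rewrite inE mem_nth ?orbT.
  - move=> Ek; move: U' => /= /andP [na _]; move: na; rewrite -Ek mem_nth //.
  - exact: IH.
  - move=> Ek; move: U' => /= /andP [na _]; move: na; rewrite -Ek mem_nth //.
move: hc; rewrite inE => /orP [/eqP hc|hc]; first by [].
by rewrite -(nth_index a hc); apply: all; rewrite index_mem.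
Qed.


Lemma hedge_next (T : finType) (hs : seq T) y r :
  uniq hs -> hedge hs y r = (y \in hs) && ((r == next hs y) || (r == prev hs y)).
Proof.
move=> U; rewrite /hedge.
case yin: (y \in hs); case rin: (r \in hs) => /=.
- congr (_ || _); apply/idP/idP => /eqP E; apply/eqP.
    by rewrite E prev_next.
  by rewrite E next_prev.
- have h1 : (r == next hs y) = false.
    by apply/negbTE/eqP => E; move: rin; rewrite E mem_next yin.
  have h2 : (r == prev hs y) = false.
    by apply/negbTE/eqP => E; move: rin; rewrite E mem_prev yin.
  by rewrite h1 h2.
- by apply/negbTE/negP => /eqP E; move: yin; rewrite E mem_next rin.
- by [].
Qed.

Lemma arc_comp (V : finType) (B : burling_tree V) u v1 v2 :
  arc B u v1 -> arc B u v2 -> anc B v1 v2 \/ anc B v2 v1.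
Proof.
rewrite /arc => h1 h2.
case: (eqVneq u (root B)) => [E|nr]; first by move: h1; rewrite E bc_root inE.
case hp: (par B u) => [pu|]; last by case: (par_nonroot nr).
case: (eqVneq (lb B pu) (Some u)) => [hl|hl].
  by move: h1; rewrite (bc_lastborn hl) inE.
have [s [hs [_ hbc]]] := bc_branch hp (elimN eqP hl).
move: h1 h2; rewrite hbc !inE; exact: branch_comp hs.
Qed.

Lemma ug_arc (V : finType) (B : burling_tree V) S u v :
  ugraph B S u v -> arc B u v || arc B v u.
Proof. by case/and3P. Qed.

Lemma ug_sym (V : finType) (B : burling_tree V) S u v :
  ugraph B S u v = ugraph B S v u.
Proof. by rewrite /ugraph andbCA orbC. Qed.

Lemma hole_nb (V : finType) (B : burling_tree V) S hs y r :
  hole (ugraph B S) hs -> y \in hs -> r \in hs ->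
  ugraph B S y r = (r == next hs y) || (r == prev hs y).
Proof. by case=> U _ E yin rin; rewrite E // hedge_next // yin. Qed.

Lemma hole_next (V : finType) (B : burling_tree V) S hs y :
  hole (ugraph B S) hs -> y \in hs ->
  ugraph B S y (next hs y) /\ ugraph B S y (prev hs y).
Proof.
move=> hH yin; rewrite !(hole_nb hH) ?mem_next ?mem_prev // !eqxx ?orbT //.
Qed.

Lemma hole_S (V : finType) (B : burling_tree V) S hs y :
  hole (ugraph B S) hs -> y \in hs -> y \in S.
Proof. by move=> hH yin; case: (hole_next hH yin) => /and3P []. Qed.

Lemma hole_noarc (V : finType) (B : burling_tree V) S hs y r :
  hole (ugraph B S) hs -> y \in hs -> r \in hs -> ~~ ugraph B S y r ->
  ~~ arc B y r /\ ~~ arc B r y.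
Proof.
move=> hH yin rin; rewrite /ugraph (hole_S hH yin) (hole_S hH rin) /=.
by rewrite negb_or => /andP.
Qed.

Lemma walk_core (V : finType) (B : burling_tree V) S hs (p : seq V) w u v :
  hole (ugraph B S) hs -> uniq p -> (forall c, (c \in p) = (c \in hs)) ->
  (forall c r, c \in hs -> r \in hs -> ugraph B S c r -> r = next p c \/ c = next p r) ->
  (forall c, c \in hs -> ugraph B S c (next p c)) ->
  w \in hs -> u \in hs -> next p u = w -> next p w = v -> anc B u v -> u <> v ->
  forall y, y \in hs -> y <> w -> y <> u -> ~~ ugraph B S y u -> anc B u y.
Proof.
move=> hH U memE adjE nadj win uin nu nw uv neuv.
pose Q c := c = u \/ ugraph B S c u \/ anc B u c.
have nin : forall c, c \in hs -> next p c \in hs by move=> c; rewrite -!memE mem_next.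
suff HQ : forall c, c \in p -> c <> w -> Q c.
  move=> y yin ynw ynu nad; case: (HQ y _ ynw); first by rewrite memE.
    by move=> E.
  by case=> [h|//]; move: nad; rewrite h.
apply: cycle_walk => //; first by rewrite memE.
  by rewrite nw; right; right.
move=> c; rewrite memE => cin cnw Qc ncw.
case: (eqVneq (next p c) u) => [->|nnu]; first by left.
case nad: (ugraph B S (next p c) u); first by right; left.
right; right.
case: Qc => [E|[h|h]].
- by subst c; case: ncw.
- case: (adjE c u cin uin h) => E; first by move: nnu; rewrite -E eqxx.
  by case: cnw; rewrite E.
- have cnu : u <> c.
    by move=> E; subst c; case: ncw.
  apply: prop_step h cnu _ (elimN eqP nnu) _.
  + exact: ug_arc (nadj c cin).
  + by case: (hole_noarc hH (nin c cin) uin (negbT nad)).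
Qed.

Lemma source_split (V : finType) (B : burling_tree V) S hs w :
  hole (ugraph B S) hs -> hsource B hs w ->
  exists u v, [/\ arc B w u, arc B w v, anc B u v, u <> v &
     (u = prev hs w /\ v = next hs w) \/ (u = next hs w /\ v = prev hs w)] /\
  (forall y, y \in hs -> y <> w -> y <> u -> ~~ ugraph B S y u -> anc B u y).
Proof.
move=> hH /and3P [win an ap].
have [U sz _] := hH.
have nnp := next_neq_prev U (leq_trans (isT : 3 <= 4) sz) win.
have nin := mem_next hs w; have pin := mem_prev hs w; rewrite win in nin pin.
case: (arc_comp ap an) => h.
  exists (prev hs w), (next hs w); split.
    split => //; first by move=> E; move: nnp; rewrite E eqxx.
    by left.
  apply: (walk_core (p := hs)) => //.
  - move=> c r cin rin; rewrite (hole_nb hH cin rin) => /orP [/eqP ->|/eqP ->].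
      by left.
    by right; rewrite next_prev.
  - by move=> c cin; case: (hole_next hH cin).
  - by rewrite next_prev.
  - by move=> E; move: nnp; rewrite E eqxx.
exists (next hs w), (prev hs w); split.
  split => //; first by move=> E; move: nnp; rewrite E eqxx.
  by right.
have nr : forall c, next (rev hs) c = prev hs c by move=> c; rewrite next_rev.
apply: (walk_core (p := rev hs)) => //.
- by rewrite rev_uniq.
- by move=> c; rewrite mem_rev.
- move=> c r cin rin; rewrite (hole_nb hH cin rin) !nr => /orP [/eqP ->|/eqP ->].
    by right; rewrite prev_next.
  by left.
- by move=> c cin; rewrite nr; case: (hole_next hH cin).
- by rewrite nr prev_next.
- by move=> E; move: nnp; rewrite E eqxx.
Qed.

Lemma depth_par (V : finType) (B : burling_tree V) c p :
  par B c = Some p -> depth B c = depth B p + 1.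
Proof. by move=> h; apply: (anc_depth (k := 1)); rewrite /= h. Qed.

Lemma exists_source (V : finType) (B : burling_tree V) S hs :
  hole (ugraph B S) hs -> exists w, hsource B hs w.
Proof.
move=> hH; have [U sz _] := hH.
have ex : exists n, has (fun y => depth B y == n) hs.
  case: hs hH U sz => [|a hs] //= hH U sz; exists (depth B a); by rewrite eqxx.
case: (ex_minnP ex) => m /hasP [w win /eqP dw] minm.
have mle : forall y, y \in hs -> m <= depth B y.
  by move=> y yin; apply: minm; apply/hasP; exists y.
have C : forall y r, y \in hs -> depth B y = m -> r \in hs -> arc B r y ->
    exists pr, par B r = Some pr /\ lb B pr = Some y /\ depth B r = m.
  move=> y r yin dy rin ry.
  have [pr [L [[hr hL hLp _ Ly] _]]] := arcP ry.
  have dL : depth B L = depth B r by rewrite (depth_par hLp) (depth_par hr).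
  have [le1 eq1] := anc_eq_depth Ly.
  have le2 := mle r rin; rewrite -dL in le2.
  have E : L = y by apply: eq1; apply/eqP; rewrite eqn_leq le1 dy le2.
  by exists pr; subst L; split => //; split => //; rewrite -dL dy.
have srcP : forall y, y \in hs -> depth B y = m -> (exists s, arc B y s) ->
    hsource B hs y.
  move=> y yin dy [s ys]; rewrite /hsource yin /=.
  have [h1 h2] := hole_next hH yin.
  apply/andP; split.
    case/orP: (ug_arc h1) => // h.
    have nin : next hs y \in hs by rewrite mem_next.
    have [pr [_ [hl _]]] := C y _ yin dy nin h.
    by move: ys; rewrite /arc (bc_lastborn hl) inE.
  case/orP: (ug_arc h2) => // h.
  have pin : prev hs y \in hs by rewrite mem_prev.
  have [pr [_ [hl _]]] := C y _ yin dy pin h.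
  by move: ys; rewrite /arc (bc_lastborn hl) inE.
case: (boolP (hsource B hs w)) => [hw|nw]; first by exists w.
have [h1 h2] := hole_next hH win.
have key : forall r, r \in hs -> ugraph B S w r -> ~~ arc B w r -> exists w', hsource B hs w'.
  move=> r rin wr nwr.
  have rw : arc B r w by move: (ug_arc wr); rewrite (negbTE nwr).
  have [pr [_ [_ dr]]] := C w r win dw rin rw.
  by exists r; apply: srcP => //; exists w.
move: nw; rewrite /hsource win /= negb_and => /orP [h|h].
  by apply: (key _ _ h1 h); rewrite mem_next.
by apply: (key _ _ h2 h); rewrite mem_prev.
Qed.

Lemma other_nb (V : finType) (B : burling_tree V) S hs x u :
  hole (ugraph B S) hs -> x \in hs -> u \in hs -> ugraph B S x u ->
  exists t, [/\ t \in hs, t <> u, ugraph B S x t,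
    (next hs x = u /\ prev hs x = t) \/ (next hs x = t /\ prev hs x = u) &
    forall r, r \in hs -> ugraph B S x r -> r = u \/ r = t].
Proof.
move=> hH xin uin xu; have [U sz _] := hH.
have nnp := next_neq_prev U (leq_trans (isT : 3 <= 4) sz) xin.
have [h1 h2] := hole_next hH xin.
move: xu; rewrite (hole_nb hH xin uin) => /orP [/eqP E|/eqP E]; subst u.
  exists (prev hs x); split => //; rewrite ?mem_prev //.
  - by move=> E; move: nnp; rewrite E eqxx.
  - by left.
  - by move=> r rin; rewrite (hole_nb hH xin rin) => /orP [/eqP ->|/eqP ->]; [left|right].
exists (next hs x); split => //; rewrite ?mem_next //.
- by move=> E; move: nnp; rewrite E eqxx.
- by right.
- by move=> r rin; rewrite (hole_nb hH xin rin) => /orP [/eqP ->|/eqP ->]; [right|left].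
Qed.

Lemma ug_neq (V : finType) (B : burling_tree V) S u v : ugraph B S u v -> u <> v.
Proof. by move=> /ug_arc /orP [/arc_neq|/arc_neq /nesym]. Qed.

Lemma three_nb (V : finType) (B : burling_tree V) S hs u a b c :
  hole (ugraph B S) hs -> u \in hs -> a \in hs -> b \in hs -> c \in hs ->
  ugraph B S u a -> ugraph B S u b -> ugraph B S u c ->
  a <> b -> b <> c -> a <> c -> False.
Proof.
move=> hH uin ain bin cin; rewrite !(hole_nb hH uin) //.
by move=> /orP [/eqP->|/eqP->] /orP [/eqP->|/eqP->] /orP [/eqP->|/eqP->].
Qed.

Lemma src_arc_ug (V : finType) (B : burling_tree V) S hs a u :
  hole (ugraph B S) hs -> hsource B hs a ->
  ((u = prev hs a /\ u = u) \/ (u = next hs a /\ u = u)) -> ugraph B S a u /\ u \in hs.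
Proof.
move=> hH /and3P [ain _ _] [[-> _]|[-> _]]; have [h1 h2] := hole_next hH ain.
  by rewrite mem_prev.
by rewrite mem_next.
Qed.

Lemma upper_x (V : finType) (B : burling_tree V) S hs x a u v :
  hole (ugraph B S) hs -> x \in hs -> ~~ hsource B hs x ->
  (forall z, z \in hs -> anc B z x -> z = x) ->
  hsource B hs a ->
  [/\ arc B a u, arc B a v, anc B u v, u <> v &
     (u = prev hs a /\ v = next hs a) \/ (u = next hs a /\ v = prev hs a)] ->
  (forall y, y \in hs -> y <> a -> y <> u -> ~~ ugraph B S y u -> anc B u y) ->
  x = u.
Proof.
move=> hH xin nsx NA sa [au av uv neuv uvE] Hw.
have ain : a \in hs by case/and3P: sa.
have [ua uin] : ugraph B S a u /\ u \in hs.
  by apply: (src_arc_ug hH sa); case: uvE => [[-> _]|[-> _]]; [left|right].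
have [va vin] : ugraph B S a v /\ v \in hs.
  by apply: (src_arc_ug hH sa); case: uvE => [[_ ->]|[_ ->]]; [right|left].
have xna : x <> a by move=> E; move: nsx; rewrite E sa.
case: (eqVneq x u) => // /eqP xnu; exfalso.
have NAu : ~ anc B u x by move=> h; apply: xnu; rewrite (NA u uin h).
case nad: (ugraph B S x u).
  2: by apply: NAu; apply: Hw => //; rewrite nad.
have [t [tin tnu xt xE tE]] := other_nb hH xin uin nad.
have tnx : t <> x by apply/nesym/(ug_neq xt).
have tna : t <> a.
  move=> E; subst t.
  have ax : ugraph B S a x by rewrite ug_sym.
  move: ax; rewrite (hole_nb hH ain xin) => /orP [/eqP E|/eqP E].
    case: uvE => [[_ E2]|[E2 _]]; first by apply: NAu; rewrite E -E2.
    by apply: xnu; rewrite E E2.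
  case: uvE => [[E2 _]|[_ E2]]; first by apply: xnu; rewrite E E2.
  by apply: NAu; rewrite E -E2.
have ntu : ~~ ugraph B S t u.
  apply/negP => tu.
  apply: (three_nb hH uin ain xin tin).
  - by rewrite ug_sym.
  - by rewrite ug_sym.
  - by rewrite ug_sym.
  - exact: nesym xna.
  - exact: nesym tnx.
  - exact: nesym tna.
have ut : anc B u t by apply: Hw.
have xt' : arc B x t.
  case/orP: (ug_arc xt) => // tx.
  have [pt [L [[ht _ hLp _ Lx] _]]] := arcP tx.
  have upt := anc_strict_par ut (nesym tnu) ht.
  by case: NAu; apply: anc_trans upt (anc_trans (anc_par hLp) Lx).
have nxu : ~~ arc B x u.
  apply/negP => xu'; move: nsx; rewrite /hsource xin.
  by case: xE => [[-> ->]|[-> ->]]; rewrite xu' xt'.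
have ux : arc B u x by move: (ug_arc nad); rewrite (negbTE nxu).
have [pu [Lu [[hu hLu hLup _ Lux] _]]] := arcP ux.
have [px [Lx [[hx hLx hLxp neLx Lxt] _]]] := arcP xt'.
have pxt : anc B px t := anc_trans (anc_par hLxp) Lxt.
case: (anc_total ut pxt) => h.
  by apply: NAu; apply: anc_trans h (anc_par hx).
have pxnu : px <> u by move=> E; apply: NAu; rewrite -E; exact: anc_par hx.
have pxpu := anc_strict_par h pxnu hu.
have pux : anc B pu x := anc_trans (anc_par hLup) Lux.
have punx : pu <> x.
  by move=> E; case: (arc_incomp ux) => _; apply; rewrite -E; exact: anc_par hu.
have pupx := anc_strict_par pux punx hx.
have E := anc_antisym pxpu pupx; subst pu.
move: hLu; rewrite hLx => -[E]; subst Lu.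
by apply: neLx; apply: sibling_anc hLxp hx Lux.
Qed.

Lemma ug_incomp (V : finType) (B : burling_tree V) S u v :
  ugraph B S u v -> ~ anc B u v /\ ~ anc B v u.
Proof.
move=> /ug_arc /orP [/arc_incomp //|/arc_incomp [h1 h2]]; by split.
Qed.

Lemma pivot_of (V : finType) (B : burling_tree V) S hs x :
  hole (ugraph B S) hs -> x \in hs -> ~~ hsource B hs x ->
  (forall z, z \in hs -> anc B z x -> z = x) -> pivot B hs x.
Proof.
move=> hH xin nsx NA.
have [w sw] := exists_source hH.
have win : w \in hs by case/and3P: sw.
have [u [v [[wu wv uv neuv uvE] Hw]]] := source_split hH sw.
have E := upper_x hH xin nsx NA sw (And5 wu wv uv neuv uvE) Hw; subst u.
have [wx _] : ugraph B S w x /\ x \in hs.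
  by apply: (src_arc_ug hH sw); case: uvE => [[-> _]|[-> _]]; [left|right].
have [vw vin] : ugraph B S w v /\ v \in hs.
  by apply: (src_arc_ug hH sw); case: uvE => [[_ ->]|[_ ->]]; [right|left].
have xw : ugraph B S x w by rewrite ug_sym.
have [t [tin tnw xt xE tE]] := other_nb hH xin win xw.
have tx : ugraph B S t x by rewrite ug_sym.
have [s [sin snx ts tE2 sE]] := other_nb hH tin xin tx.
have [nxt ntx] := ug_incomp xt.
have snw : s <> w.
  move=> E; subst s.
  have wt : ugraph B S w t by rewrite ug_sym.
  move: wt; rewrite (hole_nb hH win tin) => /orP [/eqP E|/eqP E].
    case: uvE => [[_ E2]|[E2 _]]; first by apply: nxt; rewrite E -E2.
    by case: (ug_neq xt); rewrite E E2.
  case: uvE => [[E2 _]|[_ E2]]; first by case: (ug_neq xt); rewrite E E2.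
  by apply: nxt; rewrite E -E2.
have nsx' : ~~ ugraph B S s x.
  apply/negP => sx; have : ugraph B S x s by rewrite ug_sym.
  case/(tE s sin) => E; first by apply: snw.
  by case: (ug_neq ts); rewrite E.
have xs : anc B x s by apply: Hw.
have arc_ts : arc B t s.
  case/orP: (ug_arc ts) => // st.
  have [ps [L [[hs' _ hLp _ Lt] _]]] := arcP st.
  have xps := anc_strict_par xs (nesym snx) hs'.
  by case: nxt; apply: anc_trans xps (anc_trans (anc_par hLp) Lt).
have arc_tx : arc B t x.
  case/orP: (ug_arc tx) => // xt'.
  have [px [Lx [[hx hLx hLxp neLx Lxt] _]]] := arcP xt'.
  have [pt [Lt [[ht hLt hLtp _ Lts] _]]] := arcP arc_ts.
  have pts : anc B pt s := anc_trans (anc_par hLtp) Lts.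
  case: (anc_total xs pts) => h.
    by case: nxt; apply: anc_trans h (anc_par ht).
  have ptnx : pt <> x by move=> E; apply: nxt; rewrite -E; exact: anc_par ht.
  have ptpx := anc_strict_par h ptnx hx.
  have pxt : anc B px t := anc_trans (anc_par hLxp) Lxt.
  have pxnt : px <> t by move=> E; apply: ntx; rewrite -E; exact: anc_par hx.
  have pxpt := anc_strict_par pxt pxnt ht.
  have E := anc_antisym ptpx pxpt; subst pt.
  have E : Lx = t by apply: sibling_anc hLxp ht Lxt.
  subst Lx; by move: arc_ts; rewrite /arc (bc_lastborn hLx) inE.
have st : hsource B hs t.
  by rewrite /hsource tin; case: tE2 => [[-> ->]|[-> ->]]; rewrite arc_tx arc_ts.
split.
- by rewrite /hsink xin; case: xE => [[-> ->]|[-> ->]]; rewrite wu arc_tx.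
- move=> a sa.
  have [u' [v' [[au' av' uv' neuv' uvE'] Hw']]] := source_split hH sa.
  have E := upper_x hH xin nsx NA sa (And5 au' av' uv' neuv' uvE') Hw'.
  by subst u'; rewrite au' orbT.
- move=> y yin nsy.
  case: (eqVneq y x) => [->|ynx]; first exact: anc_refl.
  apply: Hw => //.
  + by move=> E; move: nsy; rewrite E sw.
  + exact/eqP.
  + apply/negP => yx; have : ugraph B S x y by rewrite ug_sym.
    case/(tE y yin) => E; first by move: nsy; rewrite E sw.
    by move: nsy; rewrite E st.
Qed.

Lemma path_walk (T : eqType) (e : rel T) (Q : T -> Prop) x s :
  path e x s -> Q x -> (forall a b, e a b -> Q a -> b \in s -> Q b) ->
  forall k, k \in x :: s -> Q k.
Proof.
elim: s x => [|y s IH] x /=.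
  by move=> _ Qx _ k; rewrite inE => /eqP ->.
case/andP=> exy ps Qx step k; rewrite inE => /orP [/eqP ->//|kin].
have Qy : Q y by apply: step exy Qx _; rewrite inE eqxx.
apply: IH ps Qy _ k kin => a b eab Qa bin.
by apply: step eab Qa _; rewrite inE bin orbT.
Qed.

Lemma spread (V : finType) (B : burling_tree V) S (hsB ps : seq V) x xB z :
  path (ugraph B S) x ps -> xB \in x :: ps -> uniq hsB -> xB \in hsB ->
  (forall c, c \in hsB -> ugraph B S c (next hsB c)) ->
  anc B z x -> z <> x ->
  (forall k, (k \in hsB) || (k \in x :: ps) -> k <> x -> k <> z /\ ~~ arc B k z) ->
  forall k, k \in hsB -> anc B z k /\ z <> k.
Proof.
move=> pth xBin U xBh nadj zx znx NA.
pose Q k := anc B z k /\ z <> k.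
have step : forall a b, ugraph B S a b -> Q a -> (b \in hsB) || (b \in x :: ps) -> Q b.
  move=> a b ab [za zna] bin.
  case: (eqVneq b x) => [->|bnx]; first by split.
  have [bnz nbz] := NA b bin (elimN eqP bnx).
  split; last exact: nesym.
  exact: prop_step za zna (ug_arc ab) bnz nbz.
have Qp : forall k, k \in x :: ps -> Q k.
  apply: path_walk pth (conj zx znx) _ => a b ab Qa bin.
  by apply: step ab Qa _; rewrite inE bin !orbT.
have QxB := Qp xB xBin.
move=> k kin; case: (eqVneq k xB) => [->//|knx].
apply: (cycle_walk (Q := Q) U xBh) => //.
- apply: step (nadj xB xBh) QxB _; by rewrite mem_next xBh.
- move=> c cin _ Qc _; apply: step (nadj c cin) Qc _; by rewrite mem_next cin.
- exact/eqP.
Qed.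

Lemma hedge_notin (V : finType) (hs : seq V) k z :
  uniq hs -> (k \notin hs) || (z \notin hs) -> hedge hs k z = false.
Proof.
move=> U /orP [h|h].
  by rewrite hedge_next // (negbTE h).
have -> : hedge hs k z = hedge hs z k by rewrite /hedge orbC.
by rewrite hedge_next // (negbTE h).
Qed.

From Stdlib Require Import Classical.

Lemma exists_strict_anc (V : finType) (B : burling_tree V) S hs x :
  hole (ugraph B S) hs -> subordinate B hs x ->
  exists z, [/\ z \in hs, z <> x & anc B z x].
Proof.
move=> hH [xin nsx npx].
apply: NNPP => nex; apply: npx; apply: pivot_of hH xin nsx _.
move=> z zin zx; apply: NNPP => znx; apply: nex; by exists z.
Qed.

Lemma set_inter (V : finType) (k : V) (A C : seq V) (E : {set V}) :
  [set v | v \in A] :&: [set v | v \in C] = E -> (k \in A) && (k \in C) = (k \in E).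
Proof. by move=> h; rewrite -h !inE. Qed.

Theorem lemma6p2 (V : finType) (B : burling_tree V) (S : {set V})
    (hs hs' ps : seq V) (x x' : V) :
  dumbbell (ugraph B S) S hs hs' ps x x' ->
  ~ subordinate B hs x \/ ~ subordinate B hs' x'.
Proof.
move=> [[hH hH'] [Ups hps lps sps] [I1 I2 I3] SE adjE].
have [U _ _] := hH; have [U' _ _] := hH'.
case: (classic (subordinate B hs x)) => sx; last by left.
case: (classic (subordinate B hs' x')) => sx'; last by right.
exfalso.
have [z [zin znx zx]] := exists_strict_anc hH sx.
have [z' [zin' znx' zx']] := exists_strict_anc hH' sx'.
have I1k : forall k, k \in hs -> k \in ps -> k = x.
  by move=> k h1 h2; have := set_inter k I1; rewrite h1 h2 inE => /esym/eqP.
have I2k : forall k, k \in hs' -> k \in ps -> k = x'.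
  by move=> k h1 h2; have := set_inter k I2; rewrite h1 h2 inE => /esym/eqP.
have I3k : forall k, k \in hs -> k \in hs' -> k = x /\ k = x'.
  move=> k h1 h2; have := set_inter k I3; rewrite h1 h2 !inE => /esym/andP [/eqP -> /eqP ->].
  by [].
have xin : (x \in hs) && (x \in ps) by rewrite (set_inter x I1) inE.
have xin' : (x' \in hs') && (x' \in ps) by rewrite (set_inter x' I2) inE.
case/andP: xin => xhs xps; case/andP: xin' => xhs' xps'.
have inS : forall k, (k \in hs) || (k \in hs') || (k \in ps) -> k \in S.
  by move=> k h; rewrite SE inE !mem_cat orbA.
have noarc : forall k y, ugraph B S k y = false -> k \in S -> y \in S -> ~~ arc B k y.
  move=> k y; rewrite /ugraph => h kS yS; move: h; rewrite kS yS /=.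
  by move/negbT; rewrite negb_or => /andP [].
have zS : z \in S by apply: inS; rewrite zin.
have zS' : z' \in S by apply: inS; rewrite zin' orbT.
have znhs' : z \notin hs' by apply/negP => h; case: (I3k z zin h).
have znps : z \notin ps by apply/negP => h; apply: znx; apply: I1k.
have znhs : z' \notin hs by apply/negP => h; case: (I3k z' h zin').
have znps' : z' \notin ps by apply/negP => h; apply: znx'; apply: I2k.
have pedge_out : forall k y, y \notin ps -> pedge ps k y = false.
  move=> k y yn; rewrite /pedge; apply/negbTE; rewrite negb_or.
  apply/andP; split; apply/negP => /mem_infix h; move: yn; rewrite h //.
  - by rewrite !inE eqxx orbT.
  - by rewrite !inE eqxx.
have [ps0 Eps] : exists ps0, ps = x :: ps0.
  by case: (ps) hps => // a l [->]; exists l.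
subst ps.
have nhs : forall k, (k \in hs') || (k \in x :: ps0) -> k <> x -> k \notin hs.
  move=> k /orP [h|h] knx; apply/negP => kh.
    by case: (I3k k kh h).
  by apply: knx; apply: I1k.
have A := @spread V B S hs' ps0 x x' z sps xps' U' xhs'
  (fun c cin => (hole_next hH' cin).1) zx znx.
have [zz' nzz'] : anc B z z' /\ z <> z'.
  apply: A zin' => k kin knx.
  have kn := nhs k kin knx.
  split; first by move=> E; move: kn; rewrite E zin.
  apply: noarc.
  - rewrite adjE hedge_notin // ?kn // hedge_notin // ?znhs' ?orbT //.
    by rewrite pedge_out.
  - by apply: inS; case/orP: kin => ->; rewrite ?orbT.
  - exact: zS.
have [ps1 Eps1] : exists ps1, rev (x :: ps0) = x' :: ps1.
  exists (rev (belast x ps0)); rewrite lastI rev_rcons.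
  by rewrite -lps.
have memr : forall k, (k \in x' :: ps1) = (k \in x :: ps0) by move=> k; rewrite -Eps1 mem_rev.
have sps1 : path (ugraph B S) x' ps1.
  have : sorted (ugraph B S) (rev (x :: ps0)).
    rewrite rev_sorted; apply: sub_sorted sps => a b; by rewrite ug_sym.
  by rewrite Eps1.
have nhs' : forall k, (k \in hs) || (k \in x' :: ps1) -> k <> x' -> k \notin hs'.
  move=> k; rewrite memr => /orP [h|h] knx; apply/negP => kh.
    by case: (I3k k h kh).
  by apply: knx; apply: I2k.
have xps1 : x \in x' :: ps1 by rewrite memr.
have B' := @spread V B S hs ps1 x' x z' sps1 xps1 U xhs
  (fun c cin => (hole_next hH cin).1) zx' znx'.
have NAB : forall k, (k \in hs) || (k \in x' :: ps1) -> k <> x' -> k <> z' /\ ~~ arc B k z'.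
  move=> k kin knx.
  have kn := nhs' k kin knx.
  split; first by move=> E; move: kn; rewrite E zin'.
  apply: noarc.
  - rewrite adjE hedge_notin // ?znhs ?orbT // hedge_notin // ?kn //.
    by rewrite pedge_out.
  - by apply: inS; move: kin; rewrite memr => /orP [] ->; rewrite ?orbT.
  - exact: zS'.
have [z'z _] := B' NAB z zin.
by apply: nzz'; apply: anc_antisym zz' z'z.
Qed.
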